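(* Let $\mathfrak{A}$ be a sheaf of metric structures over a topological space $X$, let $\mathbb{F}$ be a filter of open subsets of $X$, and let $(\sigma_n)_{n}$ be a sequence of sections, all defined on an open set $U\in\mathbb{F}$, which is Cauchy with respect to the pseudometric $\rho_{\mathbb{F}}$. Then: (1) there exists a function $\mu_\infty$ defined on $U$ with $\mu_\infty(x)\in E_x$ for all $x\in U$ (not necessarily continuous) such that $\lim_{n\to\infty}\rho_{\mathbb{F}}(\sigma_n,\mu_\infty)=0$, where $\rho_{\mathbb{F}}$ is extended to such functions by the same formula; (2) if moreover $X$ is a regular topological space and the interior (in $E$) of the image of $\mu_\infty$ is nonempty, then there exists an open set $V\subseteq U$ such that $\mu_\infty\upharpoonright V$ is continuous.
   Context: A topological sheaf over $X$ is a pair $(E,p)$ with $p:E\to X$ a local homeomorphism; a section is a continuous $\sigma:U\to E$, $U\subseteq X$ open, with $p\circ\sigma=\mathrm{Id}_U$; $E_x=p^{-1}(x)$. A sheaf of metric structures $\mathfrak{A}$ on $X$ is such a sheaf where each fiber $E_x$ is the universe of a metric structure (in continuous logic) for a fixed metric signature, with $(E_x,d_x)$ a complete metric space of diameter $1$, and where the interpretations of predicates, functions, and the distance $d^{\mathfrak{A}}=\bigcup_x d_x$ are continuous on $\bigcup_x E_x^n$ (topologized by the basic open sets $\langle\sigma_1,\dots,\sigma_n\rangle=\{(\sigma_1(y),\dots,\sigma_n(y))\}$), constants are continuous global sections, and moduli of uniform continuity have positive infimum over $x$ at each $\varepsilon>0$. A filter of open sets is a nonempty family of nonempty open sets closed under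 finite intersections and open supersets. For $\sigma,\mu$ with domains in $\mathbb{F}$, $\mathbb{F}_{\sigma\mu}=\{W\cap\mathrm{dom}(\sigma)\cap\mathrm{dom}(\mu):W\in\mathbb{F}\}$ and $\rho_{\mathbb{F}}(\sigma,\mu)=\inf_{W\in\mathbb{F}_{\sigma\mu}}\sup_{x\in W}d_x(\sigma(x),\mu(x))$. *)

(* Defs.v *)
From HB Require Import structures.
From mathcomp Require Import all_boot all_order all_algebra.
From mathcomp Require Import all_classical all_reals all_analysis.
Set Implicit Arguments. Unset Strict Implicit. Unset Printing Implicit Defensive.
Import Order.TTheory GRing.Theory Num.Theory.
Import numFieldNormedType.Exports.
Local Open Scope classical_set_scope.
Local Open Scope ring_scope.

Record signature := Signature {
  fsym : Type; farity : fsym -> nat;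
  psym : Type; parity : psym -> nat;
  csym : Type }.

(* Raw data of a sheaf of metric structures over X with total space E.
   n-tuples of a fibre E_x are represented as pairs (x, e) with
   e : 'I_n -> E and p (e i) = x for all i (so that 0-ary tuples still
   remember their fibre). *)
Record sheaf_data (R : realType) (X E : topologicalType) (L : signature) := SheafData {
  sproj : E -> X;
  sdist : E -> E -> R;
  fun_interp : forall f : fsym L, X -> ('I_(farity f) -> E) -> E;
  pred_interp : forall P : psym L, X -> ('I_(parity P) -> E) -> R;
  const_interp : csym L -> X -> E }.

Arguments sproj {R X E L} _ _.
Arguments sdist {R X E L} _ _ _.
Arguments fun_interp {R X E L} _ _ _ _.
Arguments pred_interp {R X E L} _ _ _ _.
Arguments const_interp {R X E L} _ _ _.

Section Defs.
Context (R : realType) (X E : topologicalType) (L : signature).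
Implicit Types (A : sheaf_data R X E L).

Definition local_homeomorphism (p : E -> X) :=
  continuous p /\
  forall e : E, exists W : set E, exists g : X -> E,
    open W /\ W e /\ open (p @` W) /\
    (forall w, W w -> g (p w) = w) /\
    (forall y, (p @` W) y -> W (g y) /\ p (g y) = y) /\
    {within W, continuous p} /\ {within p @` W, continuous g}.

(* sigma is a section of A defined on the open set U (values outside U are
   irrelevant) *)
Definition is_section A (U : set X) (s : X -> E) :=
  [/\ open U, {within U, continuous s} & forall x, U x -> sproj A (s x) = x].

Definition in_fiber A n (x : X) (e : 'I_n -> E) := forall i, sproj A (e i) = x.

(* continuity of a map defined on  U_x E_x^n, for the topology generated by
   the basic open sets <sigma_1, ..., sigma_n> *)
Definition fcont A n (T : topologicalType) (f : X -> ('I_n -> E) -> T) :=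
  forall x e, in_fiber A x e ->
  forall B, nbhs (f x e) B ->
  exists W : set X, exists s : 'I_n -> X -> E,
    [/\ W x, (forall i, is_section A W (s i)), (forall i, s i x = e i) &
        forall z, W z -> B (f z (fun i => s i z))].

Definition dist2 A (x : X) (e : 'I_2 -> E) : R :=
  sdist A (e (@Ordinal 2 0 isT)) (e (@Ordinal 2 1 isT)).

Definition fiber_metric A :=
  forall a b c : E, sproj A a = sproj A b -> sproj A b = sproj A c ->
  [/\ 0 <= sdist A a b, sdist A a b <= 1, (sdist A a b = 0 <-> a = b),
      sdist A a b = sdist A b a & sdist A a c <= sdist A a b + sdist A b c].

Definition fiber_complete A :=
  forall (x : X) (u : nat -> E), (forall n, sproj A (u n) = x) ->
  (forall eps : R, 0 < eps -> exists N, forall m n, (N <= m)%N -> (N <= n)%N ->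
       sdist A (u m) (u n) < eps) ->
  exists a, sproj A a = x /\ (fun n => sdist A (u n) a) @ \oo --> (0 : R).

Definition is_metric_sheaf A :=
  local_homeomorphism (sproj A) /\
  fiber_metric A /\ fiber_complete A /\
  fcont A (dist2 A) /\
      (forall f x e, in_fiber A x e -> sproj A (fun_interp A f x e) = x) /\
      (forall f, fcont A (fun_interp A f)) /\
      (forall P x e, in_fiber A x e -> 0 <= pred_interp A P x e <= 1) /\
      (forall P, fcont A (pred_interp A P)) /\
      (forall c, is_section A setT (const_interp A c)) /\
      (* moduli of uniform continuity with positive infimum over x *)
      (forall f (eps : R), 0 < eps -> exists2 delta : R, 0 < delta &
         forall x a b, in_fiber A x a -> in_fiber A x b ->
         (forall i, sdist A (a i) (b i) < delta) ->
         sdist A (fun_interp A f x a) (fun_interp A f x b) <= eps) /\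
      (forall P (eps : R), 0 < eps -> exists2 delta : R, 0 < delta &
         forall x a b, in_fiber A x a -> in_fiber A x b ->
         (forall i, sdist A (a i) (b i) < delta) ->
         `|pred_interp A P x a - pred_interp A P x b| <= eps).

Definition open_filter (F : set (set X)) :=
  [/\ F !=set0,
      (forall W, F W -> open W /\ W !=set0),
      (forall V W, F V -> F W -> F (V `&` W)) &
      (forall V W, F V -> open W -> V `<=` W -> F W)].

(* rho_F(s, m) for (partial) functions s, m with domains Ds, Dm *)
Definition rho A (F : set (set X)) (Ds : set X) (s : X -> E)
    (Dm : set X) (m : X -> E) : R :=
  inf [set sup [set sdist A (s x) (m x) | x in W `&` Ds `&` Dm] | W in F].

Definition rho_cauchy A F (U : set X) (s : nat -> X -> E) :=
  forall eps : R, 0 < eps -> exists N, forall m n, (N <= m)%N -> (N <= n)%N ->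
    rho A F U (s m) U (s n) < eps.

End Defs.

(* Main.v *)
Require Import Defs.
From HB Require Import structures.
From mathcomp Require Import all_boot all_order all_algebra.
From mathcomp Require Import all_classical all_reals all_analysis.
From mathcomp Require Import lra.
Import Order.TTheory GRing.Theory Num.Theory.
Import numFieldNormedType.Exports.
Local Open Scope classical_set_scope.
Local Open Scope ring_scope.

Definition epsR (R : realType) (k : nat) : R := ((2:R) ^+ k)^-1.

Lemma eps_facts (R : realType) :
  let eps := epsR R in
  (forall k, 0 < eps k) /\ (forall k, eps k.+1 = eps k / 2) /\
  (forall e : R, 0 < e -> exists k, eps k < e).
Proof.
move=> eps; rewrite /eps /epsR; split; [|split].
- by move=> k; rewrite invr_gt0 exprn_gt0.
- by move=> k; rewrite exprS invfM mulrC.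
- move=> e e0.
  have e0' : 0 <= e^-1 by rewrite invr_ge0 ltW.
  have := archi_boundP e0'; set k := Num.Def.archi_bound _ => hk.
  exists k; rewrite -(invrK e) ltf_pV2 ?posrE ?invr_gt0 ?exprn_gt0 //.
  apply: lt_trans hk _.
  rewrite -natrX ltr_nat; exact: ltn_expl.
Qed.

Lemma sup_ge0_gen (R : realType) (S : set R) :
  (forall y, S y -> 0 <= y) -> 0 <= sup S.
Proof.
move=> H; have [hs|hs] := pselect (has_sup S).
- case: hs => [[y Sy] ub]; exact: le_trans (H _ Sy) (ub_le_sup ub Sy).
- by rewrite sup_out.
Qed.

Lemma sup_le_gen (R : realType) (S : set R) (c : R) :
  0 <= c -> (forall y, S y -> y <= c) -> sup S <= c.
Proof.
move=> c0 H; have [S0|S0] := pselect (S !=set0).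
- exact: ge_sup.
- have -> : S = set0 by apply/seteqP; split=> // y Sy; apply: S0; exists y.
  by rewrite sup0.
Qed.

Lemma inf_le_gen (R : realType) (S : set R) (y : R) :
  (forall z, S z -> 0 <= z) -> S y -> inf S <= y.
Proof. by move=> H Sy; apply: (ge_inf (ex_intro _ 0 H)). Qed.


Lemma rho_ge0 (R : realType) (X E : topologicalType) (L : signature)
  (A : sheaf_data R X E L) (F : set (set X)) (U : set X) (s m : X -> E) :
  F !=set0 -> (forall x, U x -> 0 <= sdist A (s x) (m x)) ->
  0 <= rho A F U s U m.
Proof.
move=> [W FW] Hd; apply: lb_le_inf.
- by eexists; exists W.
- move=> _ [V FV <-]; apply: sup_ge0_gen => _ [x [[_ Ux] _] <-]; exact: Hd.
Qed.

Lemma rho_le (R : realType) (X E : topologicalType) (L : signature)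
  (A : sheaf_data R X E L) (F : set (set X)) (U : set X) (s m : X -> E)
  (W : set X) (c : R) :
  F W -> 0 <= c -> (forall x, U x -> 0 <= sdist A (s x) (m x)) ->
  (forall x, W x -> U x -> sdist A (s x) (m x) <= c) ->
  rho A F U s U m <= c.
Proof.
move=> FW c0 Hd Hc.
apply: (@le_trans _ _ (sup [set sdist A (s x) (m x) | x in W `&` U `&` U])); first apply: inf_le_gen.
- move=> _ [V FV <-]; apply: sup_ge0_gen => _ [x [[_ Ux] _] <-]; exact: Hd.
- by exists W.
- apply: sup_le_gen => // _ [x [[Wx Ux] _] <-]; exact: Hc.
Qed.

Lemma rho_lt (R : realType) (X E : topologicalType) (L : signature)
  (A : sheaf_data R X E L) (F : set (set X)) (U : set X) (s m : X -> E)
  (eps : R) :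
  F !=set0 -> (forall x, U x -> sdist A (s x) (m x) <= 1) ->
  rho A F U s U m < eps ->
  exists2 W, F W & forall x, W x -> U x -> sdist A (s x) (m x) < eps.
Proof.
move=> [W0 FW0] Hb hlt.
have [y [W FW <-] hy] := inf_lt (ex_intro _ _ (ex_intro2 _ _ W0 FW0 erefl)) hlt.
exists W => // x Wx Ux; apply: le_lt_trans hy; apply: ub_le_sup.
- by exists 1 => _ [z [[_ Uz] _] <-]; exact: Hb.
- by exists x.
Qed.

Arguments rho_lt {R X E L A F U s m eps}.
Arguments rho_le {R X E L A F U s m W c}.
Arguments rho_ge0 {R X E L A F U s m}.

Theorem mainTheorem4 (R : realType) (X E : topologicalType) (L : signature)
  (A : sheaf_data R X E L) (HA : is_metric_sheaf A)
  (F : set (set X)) (HF : open_filter F)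
  (U : set X) (HU : F U)
  (sigma : nat -> X -> E) (Hsec : forall n, is_section A U (sigma n))
  (Hcauchy : rho_cauchy A F U sigma) :
  exists mu : X -> E,
    [/\ (forall x, U x -> sproj A (mu x) = x),
        (fun n => rho A F U (sigma n) U mu) @ \oo --> (0 : R) &
        (regular_space X -> interior (mu @` U) !=set0 ->
         exists V : set X, [/\ open V, V !=set0, V `<=` U &
                              {within V, continuous mu}])].
Proof.
case: HA => [[pcont Hlh] [Hfm [Hfc _]]].
case: HF => [Fn Fopen FI Fsup].
have [eps0 [epsS epss]] := eps_facts R.
have sec n x : U x -> sproj A (sigma n x) = x by move=> Ux; case: (Hsec n) => _ _ ->.
have dge0 a b : sproj A a = sproj A b -> 0 <= sdist A a b.
  by move=> h; case: (Hfm a b b h erefl).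
have dle1 a b : sproj A a = sproj A b -> sdist A a b <= 1.
  by move=> h; case: (Hfm a b b h erefl).
have dsym a b : sproj A a = sproj A b -> sdist A a b = sdist A b a.
  by move=> h; case: (Hfm a b b h erefl).
have dtri a b c : sproj A a = sproj A b -> sproj A b = sproj A c ->
    sdist A a c <= sdist A a b + sdist A b c.
  by move=> h1 h2; case: (Hfm a b c h1 h2).
have dzero a : sdist A a a = 0.
  by case: (Hfm a a a erefl erefl) => _ _ [_ ->].
have /choice[N HN] : forall k, exists N, forall m n, (N <= m)%N -> (N <= n)%N ->
    rho A F U (sigma m) U (sigma n) < (epsR R) k := fun k => Hcauchy _ (eps0 k).
pose M k := (\sum_(i < k.+1) N i)%N.
have MN k d : (N k <= M (k + d))%N.
  elim: d => [|d IH]; first by rewrite addn0 /M big_ord_recr /= leq_addl.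
  by rewrite addnS /M big_ord_recr /=; apply: leq_trans IH (leq_addr _ _).
have /choice[Wf HW] : forall k, exists W, F W /\ forall x, W x -> U x ->
    sdist A (sigma (M k) x) (sigma (M k.+1) x) < (epsR R) k.
  move=> k.
  have h1 : (N k <= M k)%N by have := MN k 0; rewrite addn0.
  have h2 : (N k <= M k.+1)%N by have := MN k 1; rewrite addn1.
  have hlt := HN k (M k) (M k.+1) h1 h2.
  have [W FW HW] := rho_lt Fn (fun x Ux => dle1 _ _ (etrans (sec _ _ Ux) (esym (sec _ _ Ux)))) hlt.
  by exists W.
have tele x : U x -> forall j m, (forall i, (j <= i)%N -> (i < j + m)%N -> Wf i x) ->
    sdist A (sigma (M j) x) (sigma (M (j + m)%N) x) <= 2 * (epsR R) j - 2 * (epsR R) (j + m)%N.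
  move=> Ux j; elim=> [|m IH] Hi; first by rewrite addn0 dzero subrr.
  apply: le_trans (dtri _ (sigma (M (j + m)%N) x) _ _ _) _; rewrite ?sec //.
  have jm : (j + m < j + m.+1)%N by rewrite addnS.
  have h1 := IH (fun i ji im => Hi i ji (ltn_trans im jm)).
  have h2 := (HW (j + m)%N).2 x (Hi _ (leq_addr _ _) jm) Ux.
  rewrite addnS epsS; lra.
have tele' x : U x -> forall j k, (j <= k)%N ->
    (forall i, (j <= i)%N -> (i < k)%N -> Wf i x) ->
    sdist A (sigma (M j) x) (sigma (M k) x) <= 2 * (epsR R) j.
  move=> Ux j k jk Hi; rewrite -(subnKC jk).
  apply: le_trans (tele x Ux j (k - j)%N _) _; first by rewrite subnKC.
  have := eps0 (j + (k - j))%N; lra.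
have /choice[mu Hmu] : forall x, exists a, U x -> sproj A a = x /\
    forall j, (forall i, (i < j)%N -> Wf i x) -> sdist A (sigma (M j) x) a <= 2 * (epsR R) j.
  move=> x; case: (pselect (U x)) => Ux; last by exists (sigma 0%N x).
  case: (pselect (forall i, Wf i x)) => Hall.
  - have := Hfc x (fun n => sigma (M n) x) (fun n => sec _ _ Ux) _.
    case.
      move=> e e0; have [j hj] := epss (e / 4) (divr_gt0 e0 (ltr0Sn _ 3)).
      exists j => m n jm jn.
      apply: le_lt_trans (dtri _ (sigma (M j) x) _ _ _) _; rewrite ?sec //.
      rewrite dsym ?sec //.
      have := tele' x Ux j m jm (fun i _ _ => Hall i).
      have := tele' x Ux j n jn (fun i _ _ => Hall i).
      lra.
    move=> a [pa Hlim]; exists a => _; split=> // j _.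
    apply/ler_addgt0Pr => d d0.
    have [N0 _ HN0] := (iffLR (cvgrPdist_lt _ _) Hlim) d d0.
    have jn : (j <= maxn j N0)%N by rewrite leq_maxl.
    have := HN0 (maxn j N0) (leq_maxr _ _); rewrite /= sub0r normrN ger0_norm; last first.
      by apply: dge0; rewrite sec.
    have := tele' x Ux j _ jn (fun i _ _ => Hall i).
    have := dtri (sigma (M j) x) (sigma (M (maxn j N0)) x) a; rewrite !sec // pa.
    move=> /(_ erefl erefl); lra.
  - have exP : exists i, (fun i => ~~ `[< Wf i x >]) i.
      apply: contra_notP Hall => H i; apply: contra_notP H => H.
      by exists i; apply/negP => /asboolP.
    case: (ex_minnP exP) => k0 /asboolPn nW Hmin.
    exists (sigma (M k0) x) => _; split; first exact: sec.
    move=> j Hj.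
    have jk : (j <= k0)%N.
      by rewrite leqNgt; apply/negP => /Hj.
    apply: tele' => // i _ ik; case: (pselect (Wf i x)) => // nWi.
    have : (k0 <= i)%N by apply: Hmin; apply/asboolPn.
    by rewrite leqNgt ik.
have FV j : exists V, F V /\ forall x, V x -> forall i, (i < j)%N -> Wf i x.
  elim: j => [|j [V [FV HV]]]; first by exists U.
  exists (V `&` Wf j); split; first by apply: FI => //; case: (HW j).
  move=> x [Vx Wx] i; rewrite ltnS leq_eqVlt => /orP[/eqP -> //|]; exact: HV.
exists mu; split.
- by move=> x Ux; case: (Hmu x Ux).
- apply/cvgrPdist_lt => e e0.
  have [j hj] := epss (e / 3) (divr_gt0 e0 (ltr0Sn _ 2)).
  have [V [FVV HV]] := FV j.
  have dmu x : U x -> sproj A (sigma 0%N x) = sproj A (mu x).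
    by move=> Ux; rewrite sec //; case: (Hmu x Ux).
  exists (M j) => // n /= Hn.
  have h0 : (N j <= M j)%N by have := MN j 0; rewrite addn0.
  have hlt := HN j n (M j) (leq_trans h0 Hn) h0.
  have [W FW HWd] := rho_lt Fn (fun x Ux => dle1 _ _ (etrans (sec _ _ Ux) (esym (sec _ _ Ux)))) hlt.
  have Hd : forall x, U x -> 0 <= sdist A (sigma n x) (mu x).
    by move=> x Ux; apply: dge0; rewrite sec //; case: (Hmu x Ux).
  rewrite sub0r normrN ger0_norm; last exact: rho_ge0.
  apply: le_lt_trans (rho_le (W := W `&` V) (c := 3 * (epsR R) j) _ _ Hd _) _.
  + exact: FI.
  + by have := eps0 j; lra.
  + move=> x [Wx Vx] Ux.
    have [pmu Hm] := Hmu x Ux.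
    apply: le_trans (dtri _ (sigma (M j) x) _ _ _) _; rewrite ?sec ?pmu //.
    have := HWd x Wx Ux; have := Hm j (HV x Vx); lra.
  + lra.
- move=> _ [e He].
  have [W [g [oW [We [opW [gpW [gpW2 [_ gcont]]]]]]]] := Hlh e.
  set O := interior (mu @` U) in He *.
  have gpw w : W w -> g (sproj A w) = w := gpW w.
  exists (sproj A @` W `&` (g @^-1` O)); split.
  + rewrite openE => y [[w Ww <-] Og].
    rewrite /interior /=.
    have gc := gcont; rewrite continuous_open_subspace // in gc.
    have gcw := gc (sproj A w) (mem_set (ex_intro2 _ _ w Ww erefl)).
    have h1 : nbhs (sproj A w) (g @^-1` O).
      apply: gcw; apply: open_nbhs_nbhs; split => //; exact: open_interior.
    have h2 : nbhs (sproj A w) (sproj A @` W).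
      by apply: open_nbhs_nbhs; split => //; exists w.
    by apply: filterS (filterI h2 h1) => z [].
  + exists (sproj A e); split; first by exists e.
    by rewrite /= gpw.
  + move=> y [[w Ww <-] Og]; rewrite /= gpw // in Og.
    have [u Uu <-] := interior_subset Og.
    by have [-> _] := Hmu u Uu.
  + have sV : sproj A @` W `&` (g @^-1` O) `<=` sproj A @` W by move=> y [].
    have gV := continuous_subspaceW sV gcont.
    apply: (subspace_eq_continuous _ gV).
    move=> y; rewrite inE => -[[w Ww <-] Og]; rewrite /= gpw // in Og *.
    have [u Uu hu] := interior_subset Og.
    by have [pu _] := Hmu u Uu; rewrite /from_subspace gpw // -hu pu.
Qed.
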